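(* Let $n, C \in \mathbb{Z}_{+}$, let $\bm{x}_i \in \mathbb{R}^n$, and let $\bm{v}_1, \dots, \bm{v}_C \in \mathbb{R}^n$ be such that $\|\bm{x}_i - \bm{v}_j\|_2 > 0$ for all $j \in \{1,\dots,C\}$. For a fuzzy factor $r \in (1, +\infty)$ define the fuzzy membership degrees $$u_{ij} = u_{ij}(r) = \frac{1}{\sum_{k=1}^{C}\left(\frac{\|\bm{x}_i-\bm{v}_j\|_2^2}{\|\bm{x}_i-\bm{v}_k\|_2^2}\right)^{\frac{1}{r-1}}}, \qquad j = 1,\dots,C.$$ Then $$\lim_{r\rightarrow 1^{+}}\left(\sum_{j=1}^C (u_{ij})^r\,\|\bm{x}_i-\bm{v}_j\|_2^2\right) = \min_{j\in\{1,\dots,C\}}\|\bm{x}_i-\bm{v}_j\|_2^2 .$$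
   Context: This concerns fuzzy clustering, which solves $\min_{\mathbf{U},\mathbf{V}}\sum_{j=1}^C\sum_{i=1}^M (u_{ij})^r\|\bm{x}_i-\bm{v}_j\|_2^2$ subject to $\sum_{j=1}^C u_{ij}=1$, $u_{ij}\in[0,1]$, over data points $\bm{x}_1,\dots,\bm{x}_M\in\mathbb{R}^n$, clustering centroids $\mathbf{V}=\{\bm{v}_j\}_{j=1}^C$ and membership matrix $\mathbf{U}=[u_{ij}]$; for fixed centroids, the optimal memberships are given by the closed-form expression in the claim. The claim concerns the contribution of a single data point $\bm{x}_i$ to the objective at these optimal memberships. *)

(* Defs.v *)
From mathcomp Require Import all_boot all_order all_algebra.
From mathcomp Require Import all_classical all_reals all_analysis.
Set Implicit Arguments. Unset Strict Implicit. Unset Printing Implicit Defensive.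
Import Order.TTheory GRing.Theory Num.Theory.
Local Open Scope ring_scope.

Definition sqdist (R : realType) (n : nat) (x v : 'rV[R]_n) : R :=
  \sum_(k < n) (x ord0 k - v ord0 k) ^+ 2.

Definition fuzzy_u (R : realType) (n C : nat) (x : 'rV[R]_n)
    (v : 'I_C -> 'rV[R]_n) (r : R) (j : 'I_C) : R :=
  (\sum_(k < C) powR (sqdist x (v j) / sqdist x (v k)) (r - 1)^-1)^-1.

Definition fuzzy_contrib (R : realType) (n C : nat) (x : 'rV[R]_n)
    (v : 'I_C -> 'rV[R]_n) (r : R) : R :=
  \sum_(j < C) powR (fuzzy_u x v r j) r * sqdist x (v j).

(* Main.v *)
Require Import Defs.
From mathcomp Require Import all_boot all_order all_algebra.
From mathcomp Require Import all_classical all_reals all_analysis.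
From mathcomp Require Import ring lra.
Import Order.TTheory GRing.Theory Num.Theory numFieldNormedType.Exports.
Local Open Scope classical_set_scope.
Local Open Scope ring_scope.

Lemma powRV (R : realType) (a x : R) : 0 < a -> powR (a^-1) x = (powR a x)^-1.
Proof.
move=> a0; rewrite /powR gt_eqF ?invr_gt0 // gt_eqF // lnV ?posrE //.
by rewrite mulrN expRN.
Qed.

Lemma contrib_eq (R : realType) (N : nat) (d : 'I_N -> R) (m r : R) (j0 : 'I_N) :
  (forall k, 0 < d k) -> d j0 = m -> 1 < r ->
  \sum_(j < N) powR ((\sum_(k < N) powR (d j / d k) (r - 1)^-1)^-1) r * d j =
  m / powR (\sum_(k < N) powR (m / d k) (r - 1)^-1) (r - 1).
Proof.
move=> dpos dj0 r1.
have m0 : 0 < m by rewrite -dj0.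
set s := (r - 1)^-1.
have s0 : 0 < s by rewrite invr_gt0 subr_gt0.
set t := fun k => powR (m / d k) s.
have tpos k : 0 < t k by apply: powR_gt0; rewrite divr_gt0.
set T := \sum_(k < N) t k.
have T0 : 0 < T.
  rewrite /T (bigD1 j0) //= ltr_pwDl ?tpos //.
  by apply: sumr_ge0 => k _; exact: ltW.
have hsum j : \sum_(k < N) powR (d j / d k) s = T / t j.
  rewrite /T mulr_suml; apply: eq_bigr => k _.
  have -> : d j / d k = (m / d k) * (m / d j)^-1.
    by field; rewrite ?gt_eqF //.
  rewrite powRM ?powRV ?divr_gt0 //; apply/ltW; rewrite ?invr_gt0 divr_gt0 //.
have sr : s * r = 1 + s by rewrite /s; field; rewrite subr_eq0 gt_eqF.
have hterm j : powR ((\sum_(k < N) powR (d j / d k) s)^-1) r * d j = m * t j / powR T r.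
  rewrite hsum invf_div powRM ?powRV ?(ltW (tpos j)) ?invr_ge0 ?(ltW T0) //.
  rewrite /t -powRrM sr powRD; last by apply/implyP => _; rewrite gt_eqF // divr_gt0.
  rewrite powRr1 ?divr_ge0 ?(ltW m0) ?(ltW (dpos j)) //.
  by field; rewrite ?gt_eqF ?powR_gt0.
under eq_bigr do rewrite hterm.
rewrite -mulr_suml -mulr_sumr -/T.
have hTr : powR T r = powR T (r - 1) * T.
  rewrite -{1}(subrK 1 r) [LHS]powRD; last by apply/implyP => _; rewrite gt_eqF.
  by rewrite powRr1 // ltW.
rewrite hTr; by field; rewrite ?gt_eqF ?powR_gt0.
Qed.
Lemma lim1 (R : realType) (m c : R) : 
  (fun r => m / expR ((r - 1) * c)) @ (1:R)^'+ --> m.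
Proof.
suff: (fun r => m / expR ((r - 1) * c)) @ (1:R)^'+ --> m / expR ((1 - 1) * c).
  by rewrite subrr mul0r expR0 divr1.
apply: cvg_at_right_filter.
apply: cvgMl_tmp.
apply: (cvgV (f := fun r => expR ((r - 1) * c))); first by rewrite subrr mul0r expR0 oner_neq0.
apply: (@cvg_comp _ _ _ (fun r => (r-1)*c) expR); last exact: continuous_expR.
apply: cvgMr_tmp.
apply: cvgB; [exact: cvg_id | exact: cvg_cst].
Qed.

Theorem proposition1 (R : realType) (n C : nat) (x : 'rV[R]_n.+1)
    (v : 'I_C.+1 -> 'rV[R]_n.+1)
    (hpos : forall j : 'I_C.+1, 0 < sqdist x (v j)) :
  fuzzy_contrib x v r @[r --> (1:R)^'+] -->
    \big[Order.min/sqdist x (v ord0)]_(j < C.+1) sqdist x (v j).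
Proof.
set d := fun j => sqdist x (v j).
have [j0 _ hmin] : exists2 j0 : 'I_C.+1, true & forall i, d j0 <= d i.
  by case: (@Order.TotalTheory.arg_minP _ _ _ ord0 xpredT d) => // j0 _ h; exists j0 => // i; apply: h.
have -> : \big[Order.min/sqdist x (v ord0)]_(j < C.+1) sqdist x (v j) = d j0.
  apply/le_anti/andP; split; first exact: (@bigmin_le _ _ _ _ _ (fun j => d j)).
  by apply/bigmin_geP; split => [|i _]; apply: hmin.
set m := d j0.
have m0 : 0 < m by apply: hpos.
apply: (@squeeze_cvgr _ _ _ _ (fun r => m / expR ((r - 1) * ln (C.+1%:R))) (fun=> m)); last first.
- exact: cvg_cst.
- exact: lim1.
near=> r.
have r1 : 1 < r by near: r; exact: nbhs_right_gt.
rewrite /fuzzy_contrib /fuzzy_u (@contrib_eq _ _ d m r j0) //.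
set s := (r - 1)^-1.
have s0 : 0 < s by rewrite invr_gt0 subr_gt0.
have P1 : forall y : R, powR 1 y = 1 by move=> y; rewrite powR1.
set T := \sum_(k < C.+1) powR (m / d k) s.
have tle1 k : powR (m / d k) s <= 1.
  rewrite -(P1 s); apply: ge0_ler_powR; rewrite ?nnegrE.
  - exact: ltW.
  - apply: divr_ge0; [exact: ltW m0 | exact: ltW (hpos k)].
  - by [].
  - rewrite ler_pdivrMr ?mul1r; [exact: hmin | exact: hpos].
have T1 : 1 <= T.
  rewrite /T (bigD1 j0) //= divff ?gt_eqF // P1 lerDl.
  by apply: sumr_ge0 => k _; apply: powR_ge0.
have TC : T <= C.+1%:R.
  rewrite /T; apply: le_trans (ler_sum _ (fun k _ => tle1 k)) _; by rewrite sumr_const card_ord.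
have PT1 : 1 <= powR T (r - 1).
  rewrite -[X in X <= _](P1 (r - 1)); apply: ge0_ler_powR => //.
  - by rewrite subr_ge0 ltW.
  - by rewrite nnegrE.
  - by rewrite nnegrE; exact: le_trans T1.
have PTC : powR T (r - 1) <= expR ((r - 1) * ln (C.+1%:R)).
  have -> : expR ((r - 1) * ln (C.+1%:R)) = powR C.+1%:R (r - 1) :> R.
    by rewrite /powR pnatr_eq0.
  apply: ge0_ler_powR => //.
  - by rewrite subr_ge0 ltW.
  - by rewrite nnegrE; exact: le_trans T1.
  - by rewrite nnegrE.
apply/andP; split.
  rewrite ler_pM2l // lef_pV2 ?posrE ?expR_gt0 //; exact: lt_le_trans PT1.
by rewrite ler_pdivrMr ?(lt_le_trans _ PT1) // ler_peMr // ltW.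
Unshelve. all: end_near.
Qed.
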